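(* Let $\mathcal V$ be a finite vocabulary, $L\ge1$, $P$ a distribution on $\mathcal V^L$, and $Q_\theta$ an autoregressive model on $\mathcal V^L$ whose conditionals $Q_\theta(\cdot\mid\mathbf x_{<l})$ are strictly positive and differentiable in the parameter $\theta$. Let $\alpha\in(0,1)\cup(1,\infty)$. For $\mathbf x\in\mathcal V^L$ and $l\in\{1,\dots,L\}$ let $\widehat P^{x_l}_{<l}$ be the point mass at $x_l$ (the $\gamma$-proxy distribution with $\gamma=1$). Then for every $\theta$, $$\nabla_\theta\,\mathbb E_{\mathbf x\sim P}\Big[\sum_{l=1}^L D_\alpha\big(\widehat P^{x_l}_{<l}\,\Vert\, Q_\theta(\cdot\mid\mathbf x_{<l})\big)\Big]=\nabla_\theta \mathcal L^\alpha_{\mathrm{cDiv}}(\theta),$$ where $\mathcal L^\alpha_{\mathrm{cDiv}}(\theta)=-\mathbb E_{\mathbf x\sim P}\big[\sum_{l=1}^L \bar Q_\theta(x_l\mid\mathbf x_{<l})^{1-\alpha}\log Q_\theta(x_l\mid\mathbf x_{<l})\big]$ and $\bar Q_\theta$ denotes $Q_\theta$ treated as a constant with respect to $\theta$ when differentiating (so $\nabla_\theta\mathcal L^\alpha_{\mathrm{cDiv}}(\theta)=-\mathbb E_{\mathbf x\sim P}[\sum_l Q_\theta(x_l\mid\mathbf x_{<l})^{1-\alpha}\nabla_\theta\log Q_\theta(x_l\mid\mathbf x_{<l})]$). That is, minimizing these conditional $\alpha$-divergences is equivalent (in the sense of identical gradients) to minimizing $\mathcal L^\alpha_{\mathrm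{cDiv}}$.
   Context: The (Tsallis) $\alpha$-divergence between distributions $p,q$ on a finite set is $D_\alpha(p\Vert q)=\frac{1}{\alpha-1}\big(\sum_{x}p(x)^\alpha q(x)^{1-\alpha}-1\big)$, with the convention $0^\alpha=0$. For $\gamma\in[0,1]$, the $\gamma$-proxy of the conditional target at position $l$ given an observed token $x_l$ is $\widehat P^{x_l}_{<l}(\cdot)=\gamma\,\mathbf 1_{\{x_l=\cdot\}}+(1-\gamma)Q_\theta(\cdot\mid\mathbf x_{<l})$. *)

(* Defs.v *)
From HB Require Import structures.
From mathcomp Require Import all_boot all_order all_algebra.
From mathcomp Require Import all_classical all_reals all_analysis.
Set Implicit Arguments. Unset Strict Implicit. Unset Printing Implicit Defensive.
Import Order.TTheory GRing.Theory Num.Theory.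
Import numFieldNormedType.Exports.
Local Open Scope ring_scope.

(* Tsallis alpha-divergence between p, q : V -> R on a finite set V.
   powR satisfies 0 `^ a = 0 for a <> 0, matching the convention 0^alpha = 0. *)
Definition alpha_div (R : realType) (V : finType) (alpha : R) (p q : V -> R) : R :=
  (alpha - 1)^-1 * (\sum_(x : V) p x `^ alpha * q x `^ (1 - alpha) - 1).

Definition gamma_proxy (R : realType) (V : finType) (gamma : R) (xl : V)
  (q : V -> R) : V -> R :=
  fun y => gamma * (xl == y)%:R + (1 - gamma) * q y.

(* An autoregressive model is given by its conditionals Q theta s v =
   Q_theta(v | s), where s : seq V is the prefix x_{<l} (of size l). *)

Definition cond_div_objective (R : realType) (V : finType) (L d : nat)
  (P : L.-tuple V -> R) (Q : 'rV[R]_d -> seq V -> V -> R) (alpha : R)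
  (theta : 'rV[R]_d) : R :=
  \sum_(x : L.-tuple V) P x *
    \sum_(l < L) alpha_div alpha
        (gamma_proxy 1 (tnth x l) (Q theta (take l x)))
        (Q theta (take l x)).

(* L_cDiv with stop-gradient: the factor Qbar is evaluated at the frozen
   parameter theta0, the log-term at the live parameter theta. *)
Definition cDiv_loss_sg (R : realType) (V : finType) (L d : nat)
  (P : L.-tuple V -> R) (Q : 'rV[R]_d -> seq V -> V -> R) (alpha : R)
  (theta0 theta : 'rV[R]_d) : R :=
  - \sum_(x : L.-tuple V) P x *
    \sum_(l < L) (Q theta0 (take l x) (tnth x l)) `^ (1 - alpha) *
                 ln (Q theta (take l x) (tnth x l)).

(* Main.v *)
Require Import Defs.
From HB Require Import structures.
From mathcomp Require Import all_boot all_order all_algebra.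
From mathcomp Require Import all_classical all_reals all_analysis.
From mathcomp Require Import ring lra.
Import Order.TTheory GRing.Theory Num.Theory.
Import numFieldNormedType.Exports.
Local Open Scope ring_scope.

Section Helpers.
Variables (R : realType) (d : nat).

Lemma lin_eq (f g : {linear 'rV[R]_d -> R}) : (f : _ -> _) = g -> f = g.
Proof.
case: f => f [[c1] [c2]]; case: g => g [[c3] [c4]] /= E; subst g.
by rewrite (Prop_irrelevance c1 c3) (Prop_irrelevance c2 c4).
Qed.

Lemma term_diff (q : 'rV[R]_d -> R) th (c1 c2 b : R) :
  differentiable q th -> 0 < q th ->
  c1 * (b * q th `^ (b - 1)) = c2 * (q th)^-1 ->
  differentiable (fun t => c1 * (q t `^ b - 1)) th /\
  differentiable (fun t => c2 * ln (q t)) th /\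
  'd (fun t => c1 * (q t `^ b - 1)) th = 'd (fun t => c2 * ln (q t)) th
    :> ('rV[R]_d -> R).
Proof.
move=> dq qpos E.
pose h1 := fun y : R => c1 * (y `^ b - 1).
pose h2 := fun y : R => c2 * ln y.
have D1 : is_derive (q th) 1 h1 (c1 * (b * q th `^ (b - 1))).
  have H := is_deriveZ c1 (is_deriveB (@is_derive1_powR R b (q th) qpos)
     (is_derive_cst (1:R) (q th) (1:R))).
  have E1 : h1 = c1 \*: (((@powR R)^~ b) - cst (1:R)) by apply: funext => y.
  rewrite E1; apply: (is_derive_eq H).
  by rewrite /= subr0.
have D2 : is_derive (q th) 1 h2 (c2 * (q th)^-1).
  have H := is_deriveZ c2 (@is_derive1_ln R (q th) qpos).
  have E2 : h2 = c2 \*: (@ln R) by apply: funext => y.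
  by rewrite E2.
have d1 : differentiable h1 (q th) by apply/derivable1_diffP; case: D1.
have d2 : differentiable h2 (q th) by apply/derivable1_diffP; case: D2.
have E1 : (fun t => c1 * (q t `^ b - 1)) = h1 \o q by [].
have E2 : (fun t => c2 * ln (q t)) = h2 \o q by [].
rewrite E1 E2.
have dc1 : differentiable (h1 \o q) th by apply: differentiable_comp.
have dc2 : differentiable (h2 \o q) th by apply: differentiable_comp.
split; first exact: dc1.
split; first exact: dc2.
rewrite (diff_comp dq d1) (diff_comp dq d2).
have Ed : 'd h1 (q th) = 'd h2 (q th) :> (R -> R).
  rewrite (diff1E d1) (diff1E d2) !derive1E.
  have -> : 'D_1 h1 (q th) = c1 * (b * q th `^ (b - 1)) by case: D1.
  have -> : 'D_1 h2 (q th) = c2 * (q th)^-1 by case: D2.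
  by rewrite E.
by rewrite Ed.
Qed. End Helpers.

Section Sums.
Variables (R : realType) (d : nat).

Lemma sum_diff (I : Type) (r : seq I) (F G : I -> 'rV[R]_d -> R) th :
  (forall i, differentiable (F i) th /\ differentiable (G i) th /\
     'd (F i) th = 'd (G i) th :> ('rV[R]_d -> R)) ->
  differentiable (fun t => \sum_(i <- r) F i t) th /\
  differentiable (fun t => \sum_(i <- r) G i t) th /\
  'd (fun t => \sum_(i <- r) F i t) th = 'd (fun t => \sum_(i <- r) G i t) th
     :> ('rV[R]_d -> R).
Proof.
move=> H; elim: r => [|a r [dF [dG E]]].
  have EF : (fun t => \sum_(i <- [::]) F i t) = cst 0.
    by apply: funext => t; rewrite big_nil.
  have EG : (fun t => \sum_(i <- [::]) G i t) = cst 0.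
    by apply: funext => t; rewrite big_nil.
  by rewrite EF EG; split; [|split]; [exact: differentiable_cst..|].
have EF : (fun t => \sum_(i <- a :: r) F i t) = F a + (fun t => \sum_(i <- r) F i t).
  by apply: funext => t; rewrite big_cons.
have EG : (fun t => \sum_(i <- a :: r) G i t) = G a + (fun t => \sum_(i <- r) G i t).
  by apply: funext => t; rewrite big_cons.
have [dFa [dGa Ea]] := H a.
rewrite EF EG; split; [|split].
- exact: differentiableD.
- exact: differentiableD.
- by rewrite (diffD dFa dF) (diffD dGa dG) Ea E.
Qed.
End Sums.
Theorem theorem5p4 (R : realType) (V : finType) (L d : nat)
  (P : L.-tuple V -> R) (Q : 'rV[R]_d -> seq V -> V -> R) (alpha : R) :
  (1 <= L)%N ->
  (forall x, 0 <= P x) -> \sum_(x : L.-tuple V) P x = 1 ->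
  (forall theta (s : seq V), (size s < L)%N ->
     (forall v, 0 < Q theta s v) /\ \sum_(v : V) Q theta s v = 1) ->
  (forall (s : seq V) (v : V) theta, (size s < L)%N ->
     differentiable (fun t => Q t s v) theta) ->
  0 < alpha -> alpha != 1 ->
  forall theta : 'rV[R]_d,
    differentiable (cond_div_objective P Q alpha) theta /\
    differentiable (cDiv_loss_sg P Q alpha theta) theta /\
    'd (cond_div_objective P Q alpha) theta =
    'd (cDiv_loss_sg P Q alpha theta) theta.
Proof.
move=> L1 P0 P1 Qpos Qd a0 a1 th.
have a0' : alpha != 0 by rewrite gt_eqF.
have am1 : alpha - 1 != 0 by rewrite subr_eq0.
have hs : forall (x : L.-tuple V) (l : 'I_L), (size (take l x) < L)%N.
  by move=> x l; rewrite size_take size_tuple ltn_ord ltn_ord.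
have Eobj : cond_div_objective P Q alpha = (fun t => \sum_(x : L.-tuple V)
   (fun t => \sum_(l < L) (P x / (alpha - 1)) *
      (Q t (take l x) (tnth x l) `^ (1 - alpha) - 1)) t).
  apply: funext => t; rewrite /cond_div_objective; apply: eq_bigr => x _.
  rewrite mulr_sumr; apply: eq_bigr => l _; rewrite /alpha_div.
  rewrite (bigD1 (tnth x l)) //= big1 => [|y yn].
    rewrite /gamma_proxy eqxx subrr mul0r mul1r.
    have -> : (true%:R + 0 : R) = 1 by rewrite addr0.
    by rewrite powR1 /= mul1r addr0 mulrA.
  rewrite /gamma_proxy subrr mul0r mul1r eq_sym (negbTE yn) addr0 powR0 //.
  by rewrite mul0r.
have Eloss : cDiv_loss_sg P Q alpha th = (fun t => \sum_(x : L.-tuple V)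
   (fun t => \sum_(l < L) (- (P x * Q th (take l x) (tnth x l) `^ (1 - alpha))) *
      ln (Q t (take l x) (tnth x l))) t).
  apply: funext => t; rewrite /cDiv_loss_sg -sumrN; apply: eq_bigr => x _.
  rewrite mulr_sumr -sumrN; apply: eq_bigr => l _.
  by rewrite mulNr mulrA.
rewrite Eobj Eloss.
have term : forall (x : L.-tuple V) (l : 'I_L),
  let q := fun t => Q t (take l x) (tnth x l) in
  differentiable (fun t => P x / (alpha - 1) * (q t `^ (1 - alpha) - 1)) th /\
  differentiable (fun t => - (P x * q th `^ (1 - alpha)) * ln (q t)) th /\
  'd (fun t => P x / (alpha - 1) * (q t `^ (1 - alpha) - 1)) th =
  'd (fun t => - (P x * q th `^ (1 - alpha)) * ln (q t)) th :> ('rV[R]_d -> R).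
  move=> x l q.
  have qp : 0 < q th by case: (Qpos th _ (hs x l)) => H _; apply: H.
  apply: term_diff => //; first exact: Qd.
  rewrite powRB; last by apply/implyP => _; rewrite gt_eqF.
  rewrite powRr1 ?ltW //.
  have qn : q th != 0 by rewrite gt_eqF.
  by field; rewrite am1 qn.
have [D1 [D2 E]] := @sum_diff R d _ (index_enum _) _ _ th
  (fun x => @sum_diff R d _ (index_enum _) _ _ th (fun l => term x l)).
split; first exact: D1.
split; first exact: D2.
by apply: lin_eq.
Qed.
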